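(* Let $F$ be any subfield of $\mathbb{R}$ and $r\in F$. Then (1) $T[F]$ proves $\forall x\,(x\le r\rightarrow x^2-2x+1\ge0)$ if and only if $r<1$; and (2) $T[F]$ proves $\forall x\,(x\ge r\rightarrow x^2-2x+1\ge0)$ if and only if $r>1$.
   Context: For $a\in F$, $f_a$ is a unary function symbol interpreted as $f_a(x)=ax$; a constant $c\in F$ is denoted by the term $f_c(1)$. $x^2$ denotes $x\times x$ and $2x$ denotes $f_2(x)$. $T_{\mathrm{add}}[F]$ is the set of sentences true in $(\mathbb{R},0,1,+,-,<,(f_a)_{a\in F})$, $T_{\mathrm{mult}}[F]$ the set of sentences true in $(\mathbb{R},0,1,\times,\div,<,(f_a)_{a\in F})$ with $x\div0=0$, and $T[F]=T_{\mathrm{add}}[F]\cup T_{\mathrm{mult}}[F]$, a theory in the union of the two languages. *)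

(* Defs.v *)
From Stdlib Require Import Reals List.
Open Scope R_scope.

Inductive term : Type :=
| TVar  : nat -> term
| TZero : term
| TOne  : term
| TAdd  : term -> term -> term
| TSub  : term -> term -> term
| TMul  : term -> term -> term
| TDiv  : term -> term -> term
| TF    : R -> term -> term.        (* f_a, unary, a must lie in F *)

Inductive form : Type :=
| FBot : form
| FEq  : term -> term -> form
| FLt  : term -> term -> form
| FImp : form -> form -> form
| FAll : form -> form.               (* binds de Bruijn variable 0 *)

Definition FNot (A : form) : form := FImp A FBot.
Definition FOr (A B : form) : form := FImp (FNot A) B.

Fixpoint add_term (F : R -> Prop) (t : term) : Prop :=
  match t with
  | TVar _ | TZero | TOne => True
  | TAdd u v | TSub u v => add_term F u /\ add_term F v
  | TMul _ _ | TDiv _ _ => False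
  | TF a u => F a /\ add_term F u
  end.

Fixpoint mult_term (F : R -> Prop) (t : term) : Prop :=
  match t with
  | TVar _ | TZero | TOne => True
  | TMul u v | TDiv u v => mult_term F u /\ mult_term F v
  | TAdd _ _ | TSub _ _ => False
  | TF a u => F a /\ mult_term F u
  end.

Fixpoint lang_form (P : term -> Prop) (A : form) : Prop :=
  match A with
  | FBot => True
  | FEq u v | FLt u v => P u /\ P v
  | FImp B C => lang_form P B /\ lang_form P C
  | FAll B => lang_form P B
  end.

Fixpoint term_bound (k : nat) (t : term) : Prop :=
  match t with
  | TVar n => (n < k)%nat
  | TZero | TOne => True
  | TAdd u v | TSub u v | TMul u v | TDiv u v => term_bound k u /\ term_bound k v
  | TF _ u => term_bound k u
  end.

Fixpoint form_bound (k : nat) (A : form) : Prop :=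
  match A with
  | FBot => True
  | FEq u v | FLt u v => term_bound k u /\ term_bound k v
  | FImp B C => form_bound k B /\ form_bound k C
  | FAll B => form_bound (S k) B
  end.

Definition sentence (A : form) : Prop := form_bound 0 A.

(** * Semantics in the reals (with x ÷ 0 = 0, f_a(x) = a x) *)
Definition scons {X : Type} (x : X) (f : nat -> X) (n : nat) : X :=
  match n with O => x | S k => f k end.

Definition rdiv0 (x y : R) : R := if Req_dec_T y 0 then 0 else x / y.

Fixpoint evalR (e : nat -> R) (t : term) : R :=
  match t with
  | TVar n => e n
  | TZero => 0
  | TOne => 1
  | TAdd u v => evalR e u + evalR e v
  | TSub u v => evalR e u - evalR e v
  | TMul u v => evalR e u * evalR e v
  | TDiv u v => rdiv0 (evalR e u) (evalR e v)
  | TF a u => a * evalR e u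
  end.

Fixpoint satR (e : nat -> R) (A : form) : Prop :=
  match A with
  | FBot => False
  | FEq u v => evalR e u = evalR e v
  | FLt u v => evalR e u < evalR e v
  | FImp B C => satR e B -> satR e C
  | FAll B => forall x : R, satR (scons x e) B
  end.

Definition T_add (F : R -> Prop) (A : form) : Prop :=
  lang_form (add_term F) A /\ sentence A /\ forall e, satR e A.
Definition T_mult (F : R -> Prop) (A : form) : Prop :=
  lang_form (mult_term F) A /\ sentence A /\ forall e, satR e A.
Definition T_union (F : R -> Prop) (A : form) : Prop :=
  T_add F A \/ T_mult F A.

Fixpoint subst_t (s : nat -> term) (t : term) : term :=
  match t with
  | TVar n => s n
  | TZero => TZero
  | TOne => TOne
  | TAdd u v => TAdd (subst_t s u) (subst_t s v)
  | TSub u v => TSub (subst_t s u) (subst_t s v)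
  | TMul u v => TMul (subst_t s u) (subst_t s v)
  | TDiv u v => TDiv (subst_t s u) (subst_t s v)
  | TF a u => TF a (subst_t s u)
  end.

Definition shift_t : term -> term := subst_t (fun n => TVar (S n)).

Definition up (s : nat -> term) : nat -> term := scons (TVar 0) (fun n => shift_t (s n)).

Fixpoint subst_f (s : nat -> term) (A : form) : form :=
  match A with
  | FBot => FBot
  | FEq u v => FEq (subst_t s u) (subst_t s v)
  | FLt u v => FLt (subst_t s u) (subst_t s v)
  | FImp B C => FImp (subst_f s B) (subst_f s C)
  | FAll B => FAll (subst_f (up s) B)
  end.

Definition shift_f : form -> form := subst_f (fun n => TVar (S n)).

Definition inst (A : form) (t : term) : form := subst_f (scons t TVar) A.

Inductive deriv : list form -> form -> Prop :=
| D_ax    : forall G A, In A G -> deriv G A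
| D_impI  : forall G A B, deriv (A :: G) B -> deriv G (FImp A B)
| D_impE  : forall G A B, deriv G (FImp A B) -> deriv G A -> deriv G B
| D_raa   : forall G A, deriv (FNot A :: G) FBot -> deriv G A
| D_allI  : forall G A, deriv (map shift_f G) A -> deriv G (FAll A)
| D_allE  : forall G A t, deriv G (FAll A) -> deriv G (inst A t)
| D_refl  : forall G t, deriv G (FEq t t)
| D_eqE   : forall G A s t, deriv G (FEq s t) -> deriv G (inst A s) -> deriv G (inst A t).

Definition proves (T : form -> Prop) (A : form) : Prop :=
  exists G : list form, (forall B, In B G -> T B) /\ deriv G A.

Record is_subfield (F : R -> Prop) : Prop := {
  sf_0 : F 0; sf_1 : F 1;
  sf_add : forall x y, F x -> F y -> F (x + y);
  sf_opp : forall x, F x -> F (- x);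
  sf_mul : forall x y, F x -> F y -> F (x * y);
  sf_inv : forall x, F x -> x <> 0 -> F (/ x) }.

Definition cst (c : R) : term := TF c TOne.
Definition poly (x : term) : term := TAdd (TSub (TMul x x) (TF 2 x)) TOne.
Definition le_f (u v : term) : form := FOr (FLt u v) (FEq u v).

Definition phi_le (r : R) : form :=
  FAll (FImp (le_f (TVar 0) (cst r)) (le_f TZero (poly (TVar 0)))).
Definition phi_ge (r : R) : form :=
  FAll (FImp (le_f (cst r) (TVar 0)) (le_f TZero (poly (TVar 0)))).

(* Main.v *)
Require Import Defs.
From Stdlib Require Import Reals Lra Lia Psatz List Classical ClassicalEpsilon FunctionalExtensionality.
Open Scope R_scope.

Module UFM.
From mathcomp Require Import all_boot.
From mathcomp Require Import boolp classical_sets filter.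
Lemma ultra_exists : exists U : (nat -> Prop) -> Prop,
  (forall A B : nat -> Prop, U A -> (forall n, A n -> B n) -> U B) /\
  (forall A B : nat -> Prop, U A -> U B -> U (fun n => A n /\ B n)) /\
  ~ U (fun _ => False) /\
  (forall A : nat -> Prop, U A \/ U (fun n => ~ A n)) /\
  (forall N, U (fun n => (N <= n)%coq_nat)).
Proof.
have [G [GU sFG]] := ultraFilterLemma (@eventually_filter).
exists G; split; [|split; [|split; [|split]]].
- move=> A B GA AB; exact: (filterS AB GA).
- move=> A B GA GB; exact: (filterI GA GB).
- move=> G0. exact: (filter_not_empty G G0).
- move=> A; exact: in_ultra_setVsetC.
- move=> N; apply: sFG; exists N => // n /= /leP; done.
Qed.
End UFM.

Record Str := mkStr {
  D : Type; deq : D -> D -> Prop; dlt : D -> D -> Prop;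
  d0 : D; d1 : D; dadd : D -> D -> D; dsub : D -> D -> D;
  dmul : D -> D -> D; ddiv : D -> D -> D; dF : R -> D -> D }.

Fixpoint ev (M : Str) (e : nat -> D M) (t : term) : D M :=
  match t with
  | TVar n => e n
  | TZero => d0 M
  | TOne => d1 M
  | TAdd u v => dadd M (ev M e u) (ev M e v)
  | TSub u v => dsub M (ev M e u) (ev M e v)
  | TMul u v => dmul M (ev M e u) (ev M e v)
  | TDiv u v => ddiv M (ev M e u) (ev M e v)
  | TF a u => dF M a (ev M e u)
  end.

Fixpoint sat (M : Str) (e : nat -> D M) (A : form) : Prop :=
  match A with
  | FBot => False
  | FEq u v => deq M (ev M e u) (ev M e v)
  | FLt u v => dlt M (ev M e u) (ev M e v)
  | FImp B C => sat M e B -> sat M e C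
  | FAll B => forall x : D M, sat M (scons x e) B
  end.

Record good (M : Str) : Prop := {
  g_refl : forall x, deq M x x;
  g_sym : forall x y, deq M x y -> deq M y x;
  g_trans : forall x y z, deq M x y -> deq M y z -> deq M x z;
  g_lt : forall x x' y y', deq M x x' -> deq M y y' -> dlt M x y -> dlt M x' y';
  g_add : forall x x' y y', deq M x x' -> deq M y y' -> deq M (dadd M x y) (dadd M x' y');
  g_sub : forall x x' y y', deq M x x' -> deq M y y' -> deq M (dsub M x y) (dsub M x' y');
  g_mul : forall x x' y y', deq M x x' -> deq M y y' -> deq M (dmul M x y) (dmul M x' y');
  g_div : forall x x' y y', deq M x x' -> deq M y y' -> deq M (ddiv M x y) (ddiv M x' y');
  g_F : forall a x x', deq M x x' -> deq M (dF M a x) (dF M a x') }.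

Lemma ev_subst M e s t : ev M e (subst_t s t) = ev M (fun n => ev M e (s n)) t.
Proof. induction t; simpl; congruence. Qed.

Lemma sat_subst M A : forall s e, sat M e (subst_f s A) <-> sat M (fun n => ev M e (s n)) A.
Proof.
  induction A; intros s e; simpl.
  - tauto.
  - rewrite !ev_subst; tauto.
  - rewrite !ev_subst; tauto.
  - rewrite IHA1, IHA2; tauto.
  - split; intros H x; specialize (H x); rewrite IHA in *;
    (replace (fun n : nat => ev M (scons x e) (Defs.up s n)) with (scons x (fun n => ev M e (s n))) in *;
     [exact H | apply functional_extensionality; intros [|n]; simpl; [reflexivity|];
       unfold shift_t; rewrite ev_subst; reflexivity]).
Qed.

Lemma ev_resp M (HM : good M) e e' t : (forall n, deq M (e n) (e' n)) -> deq M (ev M e t) (ev M e' t).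
Proof.
  intros H; induction t; simpl; auto; try apply g_refl; auto.
  - apply g_add; auto.
  - apply g_sub; auto.
  - apply g_mul; auto.
  - apply g_div; auto.
  - apply g_F; auto.
Qed.

Lemma sat_resp M (HM : good M) A : forall e e', (forall n, deq M (e n) (e' n)) -> (sat M e A <-> sat M e' A).
Proof.
  induction A; intros e e' H; simpl.
  - tauto.
  - pose proof (ev_resp M HM e e' t H); pose proof (ev_resp M HM e e' t0 H).
    split; intro; eauto using g_trans, g_sym.
  - pose proof (ev_resp M HM e e' t H); pose proof (ev_resp M HM e e' t0 H).
    split; intro; eapply g_lt; eauto using g_sym.
  - rewrite (IHA1 e e' H), (IHA2 e e' H); tauto.
  - split; intros H1 x; [rewrite <- (IHA (scons x e) (scons x e'))|rewrite (IHA (scons x e) (scons x e'))]; auto;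
    intros [|n]; simpl; auto; apply HM.
Qed.

Lemma sat_shift M e x B : sat M (scons x e) (shift_f B) <-> sat M e B.
Proof. unfold shift_f; rewrite sat_subst; simpl; tauto. Qed.

Lemma sat_inst M e A t : sat M e (inst A t) <-> sat M (scons (ev M e t) e) A.
Proof.
  unfold inst; rewrite sat_subst.
  replace (fun n : nat => ev M e (scons t TVar n)) with (scons (ev M e t) e); [tauto|].
  apply functional_extensionality; intros [|n]; reflexivity.
Qed.

Lemma soundness M (HM : good M) G A : deriv G A -> forall e, (forall B, In B G -> sat M e B) -> sat M e A.
Proof.
  induction 1; intros e HG; simpl in *.
  - auto.
  - intros HA; apply IHderiv; intros B0 [<-|HB]; auto.
  - apply IHderiv1; auto.
  - apply NNPP; intros HA; apply (IHderiv e); intros B0 [<-|HB]; simpl; auto.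
  - intros x; apply IHderiv; intros B1 HB1; apply in_map_iff in HB1; destruct HB1 as [B0 [<- HB]].
    apply sat_shift; auto.
  - apply sat_inst; apply IHderiv; auto.
  - apply HM.
  - apply sat_inst. specialize (IHderiv2 e HG); apply sat_inst in IHderiv2.
    specialize (IHderiv1 e HG).
    apply (sat_resp M HM A (scons (ev M e s) e)); auto.
    intros [|n]; simpl; auto; apply HM.
Qed.

Record UF (U : (nat -> Prop) -> Prop) : Prop := {
  u_mono : forall A B : nat -> Prop, U A -> (forall n, A n -> B n) -> U B;
  u_and : forall A B : nat -> Prop, U A -> U B -> U (fun n => A n /\ B n);
  u_nempty : ~ U (fun _ => False);
  u_ultra : forall A : nat -> Prop, U A \/ U (fun n => ~ A n);
  u_cof : forall N, U (fun n => (N <= n)%nat) }.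


Lemma u_full U (HU : UF U) (A : nat -> Prop) : (forall n, A n) -> U A.
Proof. intros H; eapply u_mono; [apply HU|apply (u_cof U HU 0)|]; auto. Qed.

Lemma u_ex U (HU : UF U) (A : nat -> Prop) : U A -> exists n, A n.
Proof.
  intros H; apply NNPP; intros Hn; apply (u_nempty U HU).
  eapply u_mono; [apply HU|apply H|]; intros n An; apply Hn; eauto.
Qed.

Lemma u_disj U (HU : UF U) (A B : nat -> Prop) : U A -> U B -> (forall n, A n -> B n -> False) -> False.
Proof.
  intros HA HB H; destruct (u_ex U HU _ (u_and U HU _ _ HA HB)) as [n [? ?]]; eauto.
Qed.

Lemma u_and3 U (HU : UF U) (A B C : nat -> Prop) : U A -> U B -> U C -> U (fun n => A n /\ B n /\ C n).
Proof. intros; repeat apply (u_and U HU); auto. Qed.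

Definition seqR := nat -> R.
Definition SU (U : (nat -> Prop) -> Prop) : Str :=
  mkStr seqR (fun x y => U (fun n => x n = y n)) (fun x y => U (fun n => x n < y n))
    (fun _ => 0) (fun _ => 1) (fun x y n => x n + y n) (fun x y n => x n - y n)
    (fun x y n => x n * y n) (fun x y n => rdiv0 (x n) (y n)) (fun a x n => a * x n).

Lemma SU_good U (HU : UF U) : good (SU U).
Proof.
  constructor; simpl; intros.
  - apply u_full; auto.
  - eapply u_mono; eauto; auto.
  - eapply u_mono; [auto|apply (u_and U HU _ _ H H0)|]; intros n [? ?]; congruence.
  - eapply u_mono; [auto|apply (u_and3 U HU _ _ _ H H0 H1)|]; intros n [? [? ?]]; congruence.
  - eapply u_mono; [auto|apply (u_and U HU _ _ H H0)|]; intros n [? ?]; simpl; congruence.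
  - eapply u_mono; [auto|apply (u_and U HU _ _ H H0)|]; intros n [? ?]; simpl; congruence.
  - eapply u_mono; [auto|apply (u_and U HU _ _ H H0)|]; intros n [? ?]; simpl; congruence.
  - eapply u_mono; [auto|apply (u_and U HU _ _ H H0)|]; intros n [? ?]; simpl; congruence.
  - eapply u_mono; [auto|apply H|]; intros n ?; simpl; congruence.
Qed.

Lemma ev_SU U e t n : ev (SU U) e t n = evalR (fun k => e k n) t.
Proof. induction t; simpl; congruence. Qed.

Lemma los U (HU : UF U) A : forall e, sat (SU U) e A <-> U (fun n => satR (fun k => e k n) A).
Proof.
  induction A; intros e.
  - simpl; split; [tauto|intros H; exfalso; eapply u_nempty; eauto].
  - pose proof (ev_SU U e t) as E1; pose proof (ev_SU U e t0) as E2; simpl in *.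
    split; intros H; eapply u_mono; eauto; intros n Hn; cbv beta in *; rewrite E1, E2 in *; auto.
  - pose proof (ev_SU U e t) as E1; pose proof (ev_SU U e t0) as E2; simpl in *.
    split; intros H; eapply u_mono; eauto; intros n Hn; cbv beta in *; rewrite E1, E2 in *; auto.
  - simpl; rewrite IHA1, IHA2. split.
    + intros H. destruct (u_ultra U HU (fun n => satR (fun k => e k n) A1)) as [H1|H1].
      * eapply u_mono; [auto|apply (H H1)|]; auto.
      * eapply u_mono; [auto|apply H1|]; intros n Hn Hn'; contradiction.
    + intros H H1; eapply u_mono; [auto|apply (u_and U HU _ _ H H1)|]; intros n [? ?]; auto.
  - simpl; split.
    + intros H. destruct (u_ultra U HU (fun n => forall x, satR (scons x (fun k => e k n)) A)) as [H1|H1]; auto.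
      exfalso.
      set (f := fun n => match excluded_middle_informative (exists x, ~ satR (scons x (fun k => e k n)) A) with
                         | left Hx => proj1_sig (constructive_indefinite_description _ Hx)
                         | right _ => 0 end).
      specialize (H f). rewrite IHA in H.
      apply (u_disj U HU _ _ H H1). intros n Hs Hn.
      apply not_all_ex_not in Hn.
      assert (Hf : ~ satR (scons (f n) (fun k => e k n)) A).
      { unfold f; destruct (excluded_middle_informative _) as [Hx|Hx].
        - exact (proj2_sig (constructive_indefinite_description _ Hx)).
        - exfalso; apply Hx; exact Hn. }
      apply Hf. replace (scons (f n) (fun k => e k n)) with (fun k => scons f e k n); auto.
      apply functional_extensionality; intros [|k]; reflexivity.
    + intros H x. rewrite IHA. eapply u_mono; [auto|apply H|]; intros n Hn.
      replace (fun k => scons x e k n) with (scons (x n) (fun k => e k n)); auto.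
      apply functional_extensionality; intros [|k]; reflexivity.
Qed.

Definition near (U : (nat -> Prop) -> Prop) (x : seqR) (s : R) : Prop :=
  forall d, 0 < d -> U (fun n => Rabs (x n - s) < d).

Definition Nf U (x : seqR) : option R :=
  match excluded_middle_informative (exists s, s <> 0 /\ near U x s) with
  | left H => Some (proj1_sig (constructive_indefinite_description _ H))
  | right _ => None
  end.

Definition twist U (f : R -> R) (x : seqR) : seqR :=
  match Nf U x with
  | Some s => fun n => s + s * f ((x n - s) / s)
  | None => x
  end.

Definition cont0 (f : R -> R) : Prop :=
  f 0 = 0 /\ forall d, 0 < d -> exists d', 0 < d' /\ forall u, Rabs u < d' -> Rabs (f u) < d.

Lemma near_unique U (HU : UF U) x s t : near U x s -> near U x t -> s = t.
Proof.
  intros Hs Ht. destruct (Req_dec s t) as [|Hne]; auto. exfalso.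
  assert (Hd : 0 < Rabs (s - t) / 2) by (assert (0 < Rabs (s - t)) by (apply Rabs_pos_lt; lra); lra).
  apply (u_disj U HU _ _ (Hs _ Hd) (Ht _ Hd)); intros n H1 H2.
  revert H1 H2; unfold Rabs; repeat destruct Rcase_abs; lra.
Qed.

Lemma Nf_some U (HU : UF U) x s : Nf U x = Some s -> s <> 0 /\ near U x s.
Proof.
  unfold Nf; destruct excluded_middle_informative as [H|H]; [|discriminate].
  intros E; injection E; intros <-. exact (proj2_sig (constructive_indefinite_description _ H)).
Qed.

Lemma Nf_none U x : Nf U x = None -> forall s, s <> 0 -> ~ near U x s.
Proof.
  unfold Nf; destruct excluded_middle_informative as [H|H]; [discriminate|].
  intros _ s Hs Hn; apply H; eauto.
Qed.

Lemma Nf_intro U (HU : UF U) x s : s <> 0 -> near U x s -> Nf U x = Some s.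
Proof.
  intros Hs Hn. destruct (Nf U x) as [t|] eqn:E.
  - apply Nf_some in E; auto. f_equal. apply (near_unique U HU x); tauto.
  - exfalso; eapply Nf_none; eauto.
Qed.

Lemma Nf_intro_none U x : (forall s, s <> 0 -> ~ near U x s) -> Nf U x = None.
Proof.
  intros H; unfold Nf; destruct excluded_middle_informative as [[s [Hs Hn]]|H']; auto.
  exfalso; eapply H; eauto.
Qed.

Lemma near_resp U (HU : UF U) x y s : U (fun n => x n = y n) -> near U x s -> near U y s.
Proof.
  intros Hxy Hn d Hd. eapply u_mono; [auto|apply (u_and U HU _ _ Hxy (Hn d Hd))|].
  intros n [E H]; rewrite <- E; auto.
Qed.

Lemma Nf_resp U (HU : UF U) x y : U (fun n => x n = y n) -> Nf U x = Nf U y.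
Proof.
  intros Hxy.
  assert (Hyx : U (fun n => y n = x n)) by (eapply u_mono; eauto).
  destruct (Nf U x) as [s|] eqn:E.
  - apply Nf_some in E; auto. symmetry; apply Nf_intro; auto; try tauto.
    eapply near_resp; eauto; tauto.
  - symmetry; apply Nf_intro_none; intros s Hs Hn. eapply Nf_none; eauto.
    eapply near_resp; eauto.
Qed.

Lemma twist_near U (HU : UF U) f x s : cont0 f -> s <> 0 -> near U x s ->
  near U (fun n => s + s * f ((x n - s) / s)) s.
Proof.
  intros [f0 Hf] Hs Hn d Hd.
  assert (Has : 0 < Rabs s) by (apply Rabs_pos_lt; auto).
  destruct (Hf (d / Rabs s)) as [d' [Hd' H']]. { apply Rdiv_lt_0_compat; auto. }
  eapply u_mono; [auto|apply (Hn (d' * Rabs s)); nra|]. intros n Hxn.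
  replace (s + s * f ((x n - s) / s) - s) with (s * f ((x n - s) / s)) by ring.
  rewrite Rabs_mult.
  assert (Hu : Rabs ((x n - s) / s) < d').
  { unfold Rdiv; rewrite Rabs_mult, Rabs_inv.
    apply (Rmult_lt_reg_r (Rabs s)); auto. field_simplify; lra. }
  specialize (H' _ Hu).
  apply (Rmult_lt_compat_l (Rabs s)) in H'; auto.
  replace (Rabs s * (d / Rabs s)) with d in H' by (field; lra). lra.
Qed.

Lemma Nf_twist U (HU : UF U) f x : cont0 f -> Nf U (twist U f x) = Nf U x.
Proof.
  intros Hf. unfold twist at 1. destruct (Nf U x) as [s|] eqn:E; auto.
  apply Nf_some in E; auto. apply Nf_intro; try tauto. apply twist_near; tauto.
Qed.

Lemma twist_resp U (HU : UF U) f x y : U (fun n => x n = y n) -> U (fun n => twist U f x n = twist U f y n).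
Proof.
  intros H. unfold twist. rewrite (Nf_resp U HU x y H). destruct (Nf U y); auto.
  eapply u_mono; eauto. intros n E; simpl; rewrite E; auto.
Qed.

Lemma twist_inv U (HU : UF U) p q y : cont0 p -> cont0 q -> (forall v, p (q v) = v) ->
  twist U p (twist U q y) = y.
Proof.
  intros Hp Hq Hpq. unfold twist at 1. rewrite Nf_twist; auto.
  destruct (Nf U y) as [s|] eqn:E.
  - assert (Hs : s <> 0) by (apply Nf_some in E; tauto).
    unfold twist. rewrite E.
    apply functional_extensionality; intros n.
    replace ((s + s * q ((y n - s) / s) - s) / s) with (q ((y n - s) / s)) by (field; auto).
    rewrite Hpq; field; auto.
  - unfold twist; rewrite E; auto.
Qed.

Lemma near_scale U (HU : UF U) x s a : near U x s -> near U (fun n => a * x n) (a * s).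
Proof.
  intros Hn d Hd. destruct (Req_dec a 0) as [->|Ha].
  - apply u_full; auto; intros n; replace (0 * x n - 0 * s) with 0 by ring; rewrite Rabs_R0; auto.
  - assert (Haa : 0 < Rabs a) by (apply Rabs_pos_lt; auto).
    eapply u_mono; [auto|apply (Hn (d / Rabs a)); apply Rdiv_lt_0_compat; auto|].
    intros n H. replace (a * x n - a * s) with (a * (x n - s)) by ring. rewrite Rabs_mult.
    apply (Rmult_lt_compat_l (Rabs a)) in H; auto.
    replace (Rabs a * (d / Rabs a)) with d in H by (field; lra). lra.
Qed.

Lemma twist_scale U (HU : UF U) f a x :
  U (fun n => twist U f (fun m => a * x m) n = a * twist U f x n).
Proof.
  destruct (Req_dec a 0) as [->|Ha].
  - assert (E : Nf U (fun m => 0 * x m) = None).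
    { apply Nf_intro_none; intros s Hs Hn.
      assert (Hd : 0 < Rabs s) by (apply Rabs_pos_lt; auto).
      destruct (u_ex U HU _ (Hn _ Hd)) as [n Hn'].
      rewrite Rmult_0_l, Rminus_0_l, Rabs_Ropp in Hn'. lra. }
    apply u_full; auto; intros n. unfold twist at 1; rewrite E; ring.
  - apply u_full; auto; intros n. unfold twist.
    destruct (Nf U x) as [s|] eqn:E.
    + apply Nf_some in E; auto. destruct E as [Hs Hn].
      rewrite (Nf_intro U HU _ (a * s)); [| apply Rmult_integral_contrapositive; auto | apply near_scale; auto].
      replace ((a * x n - a * s) / (a * s)) with ((x n - s) / s) by (field; auto). ring.
    + rewrite Nf_intro_none; auto. intros t Ht Hn.
      apply (Nf_none U x E (t / a)).
      * unfold Rdiv; apply Rmult_integral_contrapositive; split; auto; apply Rinv_neq_0_compat; auto.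
      * apply near_scale with (a := / a) in Hn; auto.
        replace (/ a * t) with (t / a) in Hn by (unfold Rdiv; ring).
        intros d Hd; eapply u_mono; [auto|apply (Hn d Hd)|]; intros m.
        cbv beta; replace (/ a * (a * x m)) with (x m) by (field; auto); auto.
Qed.


Lemma twist_const0 U (HU : UF U) f : twist U f (fun _ => 0) = (fun _ => 0).
Proof.
  unfold twist; rewrite Nf_intro_none; auto. intros s Hs Hn.
  assert (Hd : 0 < Rabs s) by (apply Rabs_pos_lt; auto).
  destruct (u_ex U HU _ (Hn _ Hd)) as [n Hn'].
  rewrite Rminus_0_l, Rabs_Ropp in Hn'. lra.
Qed.

Lemma twist_const1 U (HU : UF U) f : cont0 f -> twist U f (fun _ => 1) = (fun _ => 1).
Proof.
  intros [f0 _]. unfold twist; rewrite (Nf_intro U HU _ 1); try lra.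
  - apply functional_extensionality; intros n. replace ((1 - 1) / 1) with 0 by field. rewrite f0; ring.
  - intros d Hd; apply u_full; auto; intros n. replace (1 - 1) with 0 by ring; rewrite Rabs_R0; auto.
Qed.

Lemma near_lt_le U (HU : UF U) x y s t : near U x s -> near U y t -> U (fun n => x n < y n) -> s <= t.
Proof.
  intros Hx Hy H. destruct (Rle_lt_dec s t) as [|Hts]; auto. exfalso.
  assert (Hd : 0 < (s - t) / 2) by lra.
  apply (u_disj U HU _ _ (u_and U HU _ _ (Hx _ Hd) (Hy _ Hd)) H). intros n [H1 H2] H3.
  revert H1 H2; unfold Rabs; repeat destruct Rcase_abs; lra.
Qed.

Lemma near_sep U (HU : UF U) x y s t : near U x s -> near U y t -> s < t -> U (fun n => x n < y n).
Proof.
  intros Hx Hy Hst. assert (Hd : 0 < (t - s) / 2) by lra.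
  eapply u_mono; [auto|apply (u_and U HU _ _ (Hx _ Hd) (Hy _ Hd))|]. intros n [H1 H2].
  revert H1 H2; unfold Rabs; repeat destruct Rcase_abs; lra.
Qed.

Lemma not_near U (HU : UF U) y s : ~ near U y s -> exists d, 0 < d /\ U (fun n => d <= Rabs (y n - s)).
Proof.
  intros H. apply not_all_ex_not in H. destruct H as [d Hd].
  apply imply_to_and in Hd. destruct Hd as [Hd HU'].
  exists d; split; auto. destruct (u_ultra U HU (fun n => Rabs (y n - s) < d)) as [H|H]; [contradiction|].
  eapply u_mono; eauto. intros n Hn; cbv beta in *; lra.
Qed.

Definition sincr (f : R -> R) := forall u v, u < v -> f u < f v.

Lemma twist_lt U (HU : UF U) f x y : cont0 f -> sincr f ->
  U (fun n => x n < y n) -> U (fun n => twist U f x n < twist U f y n).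
Proof.
  intros Hf Hinc Hxy.
  pose proof (Nf_twist U HU f x Hf) as Ex. pose proof (Nf_twist U HU f y Hf) as Ey.
  destruct (Nf U x) as [s|] eqn:E1; destruct (Nf U y) as [t|] eqn:E2.
  - apply Nf_some in E1, E2; auto. destruct E1 as [Hs Hxs]; destruct E2 as [Ht Hyt].
    assert (Hst := near_lt_le U HU x y s t Hxs Hyt Hxy).
    destruct (Req_dec s t) as [<-|Hne].
    + unfold twist; rewrite (Nf_intro U HU x s Hs Hxs), (Nf_intro U HU y s Hs Hyt).
      eapply u_mono; eauto. intros n Hn; cbv beta in *.
      destruct (Rlt_dec 0 s) as [Hp|Hp].
      * assert (Hi : 0 < / s) by (apply Rinv_0_lt_compat; lra).
        assert (H : (x n - s) / s < (y n - s) / s) by (unfold Rdiv; nra).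
        specialize (Hinc _ _ H). nra.
      * assert (Hi : / s < 0) by (apply Rinv_lt_0_compat; lra).
        assert (H : (y n - s) / s < (x n - s) / s) by (unfold Rdiv; nra).
        specialize (Hinc _ _ H). nra.
    + apply Nf_some in Ex, Ey; auto. apply (near_sep U HU _ _ s t); tauto || lra.
  - apply Nf_some in E1; auto. destruct E1 as [Hs Hxs].
    destruct (not_near U HU y s (Nf_none U y E2 s Hs)) as [d [Hd Hyd]].
    apply Nf_some in Ex; auto. destruct Ex as [_ Htx].
    replace (twist U f y) with y by (unfold twist; rewrite E2; auto).
    eapply u_mono; [auto|apply (u_and U HU _ _ (u_and3 U HU _ _ _ Hxy (Hxs d Hd) Hyd) (Htx d Hd))|].
    intros n [[H1 [H2 H3]] H4]. revert H1 H2 H3 H4; unfold Rabs; repeat destruct Rcase_abs; lra.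
  - apply Nf_some in E2; auto. destruct E2 as [Ht Hyt].
    destruct (not_near U HU x t (Nf_none U x E1 t Ht)) as [d [Hd Hxd]].
    apply Nf_some in Ey; auto. destruct Ey as [_ Hty].
    replace (twist U f x) with x by (unfold twist; rewrite E1; auto).
    eapply u_mono; [auto|apply (u_and U HU _ _ (u_and3 U HU _ _ _ Hxy (Hyt d Hd) Hxd) (Hty d Hd))|].
    intros n [[H1 [H2 H3]] H4]. revert H1 H2 H3 H4; unfold Rabs; repeat destruct Rcase_abs; lra.
  - unfold twist; rewrite E1, E2; auto.
Qed.

Definition pf (u : R) : R := if Rle_dec 0 u then u * u else - sqrt (- u).
Definition qf (v : R) : R := if Rle_dec 0 v then sqrt v else - (v * v).

Lemma sqrt_small u d : 0 <= u -> 0 < d -> u < d * d -> sqrt u < d.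
Proof.
  intros Hu Hd H. rewrite <- (sqrt_square d) by lra. apply sqrt_lt_1_alt; lra.
Qed.

Lemma pf_cont : cont0 pf.
Proof.
  split. { unfold pf; destruct Rle_dec; lra. }
  intros d Hd. exists (Rmin (Rmin 1 d) (d * d)). split.
  { apply Rmin_glb_lt; [apply Rmin_glb_lt|]; nra. }
  intros u Hu. assert (H1 := Rmin_l (Rmin 1 d) (d * d)). assert (H2 := Rmin_r (Rmin 1 d) (d * d)).
  assert (H3 := Rmin_l 1 d). assert (H4 := Rmin_r 1 d).
  unfold pf; destruct Rle_dec as [Hp|Hp].
  - rewrite Rabs_right in Hu by lra. rewrite Rabs_right by nra. nra.
  - rewrite Rabs_left in Hu by lra. assert (Hs := sqrt_pos (- u)).
    rewrite Rabs_left1 by lra. rewrite Ropp_involutive. apply sqrt_small; lra.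
Qed.

Lemma qf_cont : cont0 qf.
Proof.
  split. { unfold qf; destruct Rle_dec; [apply sqrt_0|lra]. }
  intros d Hd. exists (Rmin (Rmin 1 d) (d * d)). split.
  { apply Rmin_glb_lt; [apply Rmin_glb_lt|]; nra. }
  intros u Hu. assert (H1 := Rmin_l (Rmin 1 d) (d * d)). assert (H2 := Rmin_r (Rmin 1 d) (d * d)).
  assert (H3 := Rmin_l 1 d). assert (H4 := Rmin_r 1 d).
  unfold qf; destruct Rle_dec as [Hp|Hp].
  - rewrite Rabs_right in Hu by lra. assert (Hs := sqrt_pos u).
    rewrite Rabs_right by lra. apply sqrt_small; lra.
  - rewrite Rabs_left in Hu by lra. rewrite Rabs_left1 by nra. nra.
Qed.

Lemma pf_incr : sincr pf.
Proof.
  intros u v Huv. unfold pf; destruct (Rle_dec 0 u); destruct (Rle_dec 0 v).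
  - nra.
  - lra.
  - assert (0 < sqrt (- u)) by (apply sqrt_lt_R0; lra). nra.
  - assert (sqrt (- v) < sqrt (- u)) by (apply sqrt_lt_1_alt; lra). lra.
Qed.

Lemma pf_qf v : pf (qf v) = v.
Proof.
  unfold qf, pf. destruct (Rle_dec 0 v).
  - destruct (Rle_dec 0 (sqrt v)) as [|H]; [apply sqrt_sqrt; auto|exfalso; apply H; apply sqrt_pos].
  - destruct (Rle_dec 0 (- (v * v))) as [H|H]; [nra|].
    rewrite Ropp_involutive. replace (v * v) with ((- v) * (- v)) by ring.
    rewrite sqrt_square by lra. ring.
Qed.

Definition tau U (x : seqR) : seqR := twist U pf x.
Definition tinv U (x : seqR) : seqR := twist U qf x.

Lemma tau_tinv U (HU : UF U) y : tau U (tinv U y) = y.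
Proof. apply twist_inv; auto using pf_cont, qf_cont, pf_qf. Qed.

Definition MM (U : (nat -> Prop) -> Prop) : Str :=
  mkStr seqR (fun x y => U (fun n => x n = y n)) (fun x y => U (fun n => x n < y n))
    (fun _ => 0) (fun _ => 1) (fun x y n => x n + y n) (fun x y n => x n - y n)
    (fun x y => tinv U (fun n => tau U x n * tau U y n))
    (fun x y => tinv U (fun n => rdiv0 (tau U x n) (tau U y n))) (fun a x n => a * x n).

Lemma MM_good U (HU : UF U) : good (MM U).
Proof.
  constructor; simpl; intros.
  - apply u_full; auto.
  - eapply u_mono; eauto; auto.
  - eapply u_mono; [auto|apply (u_and U HU _ _ H H0)|]; intros n [? ?]; congruence.
  - eapply u_mono; [auto|apply (u_and3 U HU _ _ _ H H0 H1)|]; intros n [? [? ?]]; congruence.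
  - eapply u_mono; [auto|apply (u_and U HU _ _ H H0)|]; intros n [? ?]; simpl; congruence.
  - eapply u_mono; [auto|apply (u_and U HU _ _ H H0)|]; intros n [? ?]; simpl; congruence.
  - unfold tinv, tau; apply twist_resp; auto.
    apply (twist_resp U HU pf) in H; apply (twist_resp U HU pf) in H0.
    eapply u_mono; [auto|apply (u_and U HU _ _ H H0)|]; intros n [? ?]; unfold tau; simpl; congruence.
  - unfold tinv, tau; apply twist_resp; auto.
    apply (twist_resp U HU pf) in H; apply (twist_resp U HU pf) in H0.
    eapply u_mono; [auto|apply (u_and U HU _ _ H H0)|]; intros n [? ?]; unfold tau; simpl; congruence.
  - eapply u_mono; [auto|apply H|]; intros n ?; simpl; congruence.
Qed.

Lemma add_ev U F t e : add_term F t -> ev (MM U) e t = ev (SU U) e t.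
Proof.
  induction t; simpl; intros H; try tauto.
  - destruct H; rewrite IHt1, IHt2; auto.
  - destruct H; rewrite IHt1, IHt2; auto.
  - destruct H; rewrite IHt; auto.
Qed.

Lemma add_sat U F A : lang_form (add_term F) A -> forall e, sat (MM U) e A <-> sat (SU U) e A.
Proof.
  induction A; simpl; intros H e; try tauto.
  - destruct H; rewrite (add_ev U F t), (add_ev U F t0); auto; tauto.
  - destruct H; rewrite (add_ev U F t), (add_ev U F t0); auto; tauto.
  - destruct H; rewrite IHA1, IHA2; auto; tauto.
  - split; intros H' x; apply IHA; auto.
Qed.

Lemma trich U (HU : UF U) (x y : seqR) :
  U (fun n => x n = y n) \/ U (fun n => x n < y n) \/ U (fun n => y n < x n).
Proof.
  destruct (u_ultra U HU (fun n => x n = y n)) as [H|H]; auto.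
  destruct (u_ultra U HU (fun n => x n < y n)) as [H'|H']; auto.
  right; right. eapply u_mono; [auto|apply (u_and U HU _ _ H H')|]; intros n [? ?]; lra.
Qed.

Lemma tau_lt U (HU : UF U) x y : U (fun n => x n < y n) -> U (fun n => tau U x n < tau U y n).
Proof. intros H; exact (twist_lt U HU pf x y pf_cont pf_incr H). Qed.

Lemma tau_eq_iff U (HU : UF U) x y : U (fun n => x n = y n) <-> U (fun n => tau U x n = tau U y n).
Proof.
  split; [apply twist_resp; auto|]. intros H.
  destruct (trich U HU x y) as [E|[E|E]]; auto; exfalso; apply (tau_lt U HU) in E;
  apply (u_disj U HU _ _ H E); intros n h1 h2; cbv beta in *; lra.
Qed.

Lemma tau_lt_iff U (HU : UF U) x y : U (fun n => x n < y n) <-> U (fun n => tau U x n < tau U y n).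
Proof.
  split; [apply tau_lt; auto|]. intros H.
  destruct (trich U HU x y) as [E|[E|E]]; auto; exfalso.
  - apply (twist_resp U HU pf) in E. apply (u_disj U HU _ _ H E); intros n h1 h2; cbv beta in *; unfold tau in *; lra.
  - apply (tau_lt U HU) in E. apply (u_disj U HU _ _ H E); intros n h1 h2; cbv beta in *; lra.
Qed.

Lemma mult_ev U (HU : UF U) F t e : mult_term F t ->
  U (fun n => tau U (ev (MM U) e t) n = ev (SU U) (fun k => tau U (e k)) t n).
Proof.
  pose proof (SU_good U HU) as G.
  induction t; simpl; intros H; try tauto.
  - apply (g_refl _ G).
  - unfold tau; rewrite twist_const0; auto. apply (g_refl _ G).
  - unfold tau; rewrite twist_const1; auto using pf_cont. apply (g_refl _ G).
  - destruct H. rewrite tau_tinv; auto. apply (g_mul _ G); [apply IHt1|apply IHt2]; auto.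
  - destruct H. rewrite tau_tinv; auto. apply (g_div _ G); [apply IHt1|apply IHt2]; auto.
  - destruct H. eapply (g_trans _ G); [exact (twist_scale U HU pf r (ev (MM U) e t))|]. apply (g_F _ G); apply IHt; auto.
Qed.

Lemma mult_sat U (HU : UF U) F A : lang_form (mult_term F) A ->
  forall e, sat (MM U) e A <-> sat (SU U) (fun k => tau U (e k)) A.
Proof.
  pose proof (SU_good U HU) as G.
  induction A; simpl; intros H e; try tauto.
  - destruct H as [H1 H2]. pose proof (mult_ev U HU F t e H1) as E1. pose proof (mult_ev U HU F t0 e H2) as E2.
    simpl in E1, E2. rewrite tau_eq_iff; auto. split; intros.
    + eapply (g_trans _ G); [apply (g_sym _ G); exact E1|]. eapply (g_trans _ G); [exact H|exact E2].
    + eapply (g_trans _ G); [exact E1|]. eapply (g_trans _ G); [exact H|apply (g_sym _ G); exact E2].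
  - destruct H as [H1 H2]. pose proof (mult_ev U HU F t e H1) as E1. pose proof (mult_ev U HU F t0 e H2) as E2.
    simpl in E1, E2. rewrite tau_lt_iff; auto. split; intros.
    + eapply (g_lt _ G); [exact E1|exact E2|exact H].
    + eapply (g_lt _ G); [apply (g_sym _ G); exact E1|apply (g_sym _ G); exact E2|exact H].
  - destruct H; rewrite IHA1, IHA2; auto; tauto.
  - split; intros H' x.
    + specialize (H' (tinv U x)). rewrite IHA in H'; auto.
      replace (scons x (fun k => tau U (e k))) with (fun k => tau U (scons (tinv U x) e k)); auto.
      apply functional_extensionality; intros [|k]; simpl; auto. apply tau_tinv; auto.
    + rewrite IHA; auto.
      replace (fun k => tau U (scons x e k)) with (scons (tau U x) (fun k => tau U (e k))); auto.
      apply functional_extensionality; intros [|k]; simpl; auto.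
Qed.

Lemma MM_T U (HU : UF U) F B : T_union F B -> forall e, sat (MM U) e B.
Proof.
  intros [[HL [_ HT]]|[HL [_ HT]]] e.
  - rewrite add_sat by eauto. apply los; auto. apply u_full; auto.
  - rewrite mult_sat by eauto. apply los; auto. apply u_full; auto.
Qed.

Definition sq (n : nat) : R := / (INR n + 4).

Lemma sq_pos n : 0 < sq n.
Proof. unfold sq; apply Rinv_0_lt_compat; pose proof (pos_INR n); lra. Qed.

Lemma sq_le n : sq n <= / 4.
Proof. unfold sq; apply Rinv_le_contravar; [lra|]; pose proof (pos_INR n); lra. Qed.

Lemma sq_small U (HU : UF U) d : 0 < d -> U (fun n => sq n < d).
Proof.
  intros Hd. destruct (archimed_cor1 d Hd) as [N [HN HN0]].
  eapply u_mono; [auto|apply (u_cof U HU N)|]. intros n Hn; cbv beta in *.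
  unfold sq. apply Rle_lt_trans with (/ INR N); auto.
  apply Rinv_le_contravar. { apply lt_0_INR; lia. }
  apply le_INR in Hn; lra.
Qed.

Lemma near_bound U (HU : UF U) x c K : 0 < K -> (forall n, Rabs (x n - c) <= K * sq n) -> near U x c.
Proof.
  intros HK H d Hd. eapply u_mono; [auto|apply (sq_small U HU (d / K)); apply Rdiv_lt_0_compat; auto|].
  intros n Hn; cbv beta in *. specialize (H n).
  apply (Rmult_lt_compat_l K) in Hn; auto. replace (K * (d / K)) with d in Hn by (field; lra). lra.
Qed.

Lemma tau_x_le U (HU : UF U) : tau U (fun n => 1 - sq n * sq n) = (fun n => 1 - sq n).
Proof.
  unfold tau, twist. rewrite (Nf_intro U HU _ 1); [|lra|].
  - apply functional_extensionality; intros n. pose proof (sq_pos n).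
    replace ((1 - sq n * sq n - 1) / 1) with (- (sq n * sq n)) by field.
    unfold pf; destruct Rle_dec; [nra|]. rewrite Ropp_involutive, sqrt_square; lra.
  - apply (near_bound U HU _ _ 1); [lra|]. intros n. pose proof (sq_pos n); pose proof (sq_le n).
    rewrite Rabs_left1; nra.
Qed.

Lemma tinv_w_le U (HU : UF U) : tinv U (fun n => (1 - sq n) * (1 - sq n)) =
  (fun n => 1 - (sq n * sq n - 2 * sq n) * (sq n * sq n - 2 * sq n)).
Proof.
  unfold tinv, twist. rewrite (Nf_intro U HU _ 1); [|lra|].
  - apply functional_extensionality; intros n. pose proof (sq_pos n); pose proof (sq_le n).
    replace (((1 - sq n) * (1 - sq n) - 1) / 1) with (sq n * sq n - 2 * sq n) by field.
    unfold qf; destruct Rle_dec; [nra|]. ring.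
  - apply (near_bound U HU _ _ 2); [lra|]. intros n. pose proof (sq_pos n); pose proof (sq_le n).
    rewrite Rabs_left1; nra.
Qed.

Lemma tau_x_ge U (HU : UF U) : tau U (fun n => 1 + sq n) = (fun n => 1 + sq n * sq n).
Proof.
  unfold tau, twist. rewrite (Nf_intro U HU _ 1); [|lra|].
  - apply functional_extensionality; intros n. pose proof (sq_pos n).
    replace ((1 + sq n - 1) / 1) with (sq n) by field.
    unfold pf; destruct Rle_dec; [ring|lra].
  - apply (near_bound U HU _ _ 1); [lra|]. intros n. pose proof (sq_pos n); pose proof (sq_le n).
    rewrite Rabs_right; nra.
Qed.

Lemma tinv_w_ge U (HU : UF U) : tinv U (fun n => (1 + sq n * sq n) * (1 + sq n * sq n)) =
  (fun n => 1 + sqrt (2 * (sq n * sq n) + (sq n * sq n) * (sq n * sq n))).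
Proof.
  unfold tinv, twist. rewrite (Nf_intro U HU _ 1); [|lra|].
  - apply functional_extensionality; intros n. pose proof (sq_pos n); pose proof (sq_le n).
    replace (((1 + sq n * sq n) * (1 + sq n * sq n) - 1) / 1) with (2 * (sq n * sq n) + (sq n * sq n) * (sq n * sq n)) by field.
    unfold qf; destruct Rle_dec; [ring|nra].
  - apply (near_bound U HU _ _ 3); [lra|]. intros n. pose proof (sq_pos n); pose proof (sq_le n).
    cbv beta. rewrite Rabs_right; [|nra]. assert (sq n * sq n <= sq n) by nra. assert (sq n * sq n * (sq n * sq n) <= sq n) by nra. nra.
Qed.

Lemma cex_le U (HU : UF U) r e : 1 <= r -> ~ sat (MM U) e (phi_le r).
Proof.
  intros Hr H. simpl in H. specialize (H (fun n => 1 - sq n * sq n)). simpl in H.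
  rewrite (tau_x_le U HU) in H. cbv beta in H. rewrite (tinv_w_le U HU) in H. cbv beta in H.
  assert (HP : forall n, 1 - (sq n * sq n - 2 * sq n) * (sq n * sq n - 2 * sq n) - 2 * (1 - sq n * sq n) + 1 < 0).
  { intros n; pose proof (sq_pos n); pose proof (sq_le n). nra. }
  assert (H1 : U (fun n => 1 - sq n * sq n < r * 1)).
  { apply u_full; auto; intros n; pose proof (sq_pos n); nra. }
  assert (H2 := H (fun H0 => False_ind _ (H0 H1))).
  assert (H3 : U (fun n => 0 = 1 - (sq n * sq n - 2 * sq n) * (sq n * sq n - 2 * sq n) - 2 * (1 - sq n * sq n) + 1)).
  { apply H2. intros H4. destruct (u_ex U HU _ H4) as [n Hn]. specialize (HP n). lra. }
  destruct (u_ex U HU _ H3) as [n Hn]. specialize (HP n). lra.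
Qed.

Lemma cex_ge U (HU : UF U) r e : r <= 1 -> ~ sat (MM U) e (phi_ge r).
Proof.
  intros Hr H. simpl in H. specialize (H (fun n => 1 + sq n)). simpl in H.
  rewrite (tau_x_ge U HU) in H. cbv beta in H. rewrite (tinv_w_ge U HU) in H. cbv beta in H.
  assert (HP : forall n, 1 + sqrt (2 * (sq n * sq n) + (sq n * sq n) * (sq n * sq n)) - 2 * (1 + sq n) + 1 < 0).
  { intros n; pose proof (sq_pos n); pose proof (sq_le n).
    assert (sqrt (2 * (sq n * sq n) + (sq n * sq n) * (sq n * sq n)) < 2 * sq n).
    { apply sqrt_small; [nra|lra|]. assert (sq n * sq n * (sq n * sq n) < 2 * (sq n * sq n)) by (apply Rmult_lt_compat_r; nra). lra. }
    lra. }
  assert (H1 : U (fun n => r * 1 < 1 + sq n)).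
  { apply u_full; auto; intros n; pose proof (sq_pos n); nra. }
  assert (H2 := H (fun H0 => False_ind _ (H0 H1))).
  assert (H3 : U (fun n => 0 = 1 + sqrt (2 * (sq n * sq n) + (sq n * sq n) * (sq n * sq n)) - 2 * (1 + sq n) + 1)).
  { apply H2. intros H4. destruct (u_ex U HU _ H4) as [n Hn]. specialize (HP n). lra. }
  destruct (u_ex U HU _ H3) as [n Hn]. specialize (HP n). lra.
Qed.

Fixpoint imps (Ps : list form) (C : form) : form :=
  match Ps with nil => C | P :: Ps' => FImp P (imps Ps' C) end.

Definition cP (a : R) : form := FImp (le_f (cst a) (TVar 1)) (le_f (TF a (TVar 1)) (TVar 0)).
Definition cP' (a : R) : form := FImp (le_f (cst a) (TVar 0)) (le_f (TF a (TVar 0)) (TMul (TVar 0) (TVar 0))).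
Definition pos0 : form := le_f TZero (TVar 0).
Definition concl : form := le_f TZero (TAdd (TSub (TVar 0) (TF 2 (TVar 1))) TOne).
Definition alpha (H : form) (l : list R) : form := FAll (FAll (FImp H (imps (pos0 :: map cP l) concl))).
Definition mu (a : R) : form := FAll (cP' a).
Definition mu0 : form := FAll (le_f TZero (TMul (TVar 0) (TVar 0))).
Definition Gam (H : form) (l : list R) : list form := alpha H l :: mu0 :: map mu l.

Lemma subst_imps s Ps C : subst_f s (imps Ps C) = imps (map (subst_f s) Ps) (subst_f s C).
Proof. induction Ps; simpl; f_equal; auto. Qed.

Lemma imps_elim G Ps C : deriv G (imps Ps C) -> (forall P, In P Ps -> deriv G P) -> deriv G C.
Proof.
  revert C; induction Ps; simpl; intros C H1 H2; auto.
  apply IHPs; auto. eapply D_impE; eauto.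
Qed.

Lemma shift_alpha H l :
  subst_f (Defs.up (Defs.up (fun n => TVar (S n)))) H = H -> shift_f (alpha H l) = alpha H l.
Proof.
  intros EH. unfold alpha, shift_f. simpl. rewrite EH, subst_imps. simpl.
  rewrite map_map. reflexivity.
Qed.

Lemma shift_Gam H l : subst_f (Defs.up (Defs.up (fun n => TVar (S n)))) H = H ->
  map shift_f (Gam H l) = Gam H l.
Proof.
  intros EH. unfold Gam; simpl. rewrite shift_alpha; auto. f_equal. f_equal.
  rewrite map_map. apply map_ext; reflexivity.
Qed.

Lemma derive_phi H1 H0 l :
  subst_f (Defs.up (Defs.up (fun n => TVar (S n)))) H1 = H1 ->
  subst_f (scons (TMul (TVar 0) (TVar 0)) TVar) (subst_f (Defs.up (scons (TVar 0) TVar)) H1) = H0 ->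
  deriv (Gam H1 l) (FAll (FImp H0 (le_f TZero (Defs.poly (TVar 0))))).
Proof.
  intros EH E0. apply D_allI. rewrite shift_Gam by auto. apply D_impI.
  set (Γ := H0 :: Gam H1 l).
  assert (Ha : deriv Γ (alpha H1 l)) by (apply D_ax; simpl; auto).
  pose proof (D_allE _ _ (TMul (TVar 0) (TVar 0)) (D_allE _ _ (TVar 0) Ha)) as X.
  assert (EX : inst (subst_f (Defs.up (scons (TVar 0) TVar)) (FImp H1 (imps (pos0 :: map cP l) concl))) (TMul (TVar 0) (TVar 0))
     = FImp H0 (imps (le_f TZero (TMul (TVar 0) (TVar 0)) :: map cP' l) (le_f TZero (Defs.poly (TVar 0))))).
  { unfold inst. simpl. rewrite E0. rewrite !subst_imps. simpl. rewrite !map_map. do 4 f_equal.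
 }
  change (deriv Γ (inst (subst_f (Defs.up (scons (TVar 0) TVar)) (FImp H1 (imps (pos0 :: map cP l) concl))) (TMul (TVar 0) (TVar 0)))) in X.
  rewrite EX in X.
  apply (imps_elim _ _ _ (D_impE _ _ _ X (D_ax Γ H0 (or_introl eq_refl)))).
  intros P [<-|HP].
  - pose proof (D_allE Γ _ (TVar 0) (D_ax Γ mu0 ltac:(simpl; auto))) as Y. exact Y.
  - apply in_map_iff in HP. destruct HP as [a [<- Ha']].
    pose proof (D_allE Γ _ (TVar 0) (D_ax Γ (mu a) ltac:(simpl; right; right; right; apply in_map; auto))) as Y.
    exact Y.
Qed.

Lemma sat_le e u v : satR e (le_f u v) <-> evalR e u <= evalR e v.
Proof. simpl. split; intros H. - destruct (Rlt_dec (evalR e u) (evalR e v)); [lra|]. right; tauto. - intros H1; lra. Qed.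

Lemma sat_imps e Ps C : satR e (imps Ps C) <-> ((forall P, In P Ps -> satR e P) -> satR e C).
Proof.
  induction Ps; simpl. - split; auto; intros H; apply H; tauto.
  - rewrite IHPs. split; intros H.
    + intros H1; apply H; auto.
    + intros H1 H2; apply H; intros P [<-|HP]; auto.
Qed.

Lemma alpha_true H l :
  (forall x y e, satR (scons y (scons x e)) H -> 0 <= y -> (forall a, In a l -> a * 1 <= x -> a * x <= y) ->
      0 <= y - 2 * x + 1) -> forall e, satR e (alpha H l).
Proof.
  intros Hs e x y HH. apply sat_imps. intros HP.
  apply sat_le. simpl. apply (Hs x y e HH).
  - assert (h := HP _ (or_introl eq_refl)). apply sat_le in h. simpl in h. lra.
  - intros a Ha Hax. assert (h := HP (cP a) (or_intror (in_map _ _ _ Ha))).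
    unfold cP in h. change (satR (scons y (scons x e)) (le_f (cst a) (TVar 1)) -> satR (scons y (scons x e)) (le_f (TF a (TVar 1)) (TVar 0))) in h. rewrite !sat_le in h. simpl in h. apply h; auto.
Qed.

Lemma mu_true a : 0 <= a -> forall e, satR e (mu a).
Proof.
  intros Ha e x. unfold mu, cP'. change (satR (scons x e) (le_f (cst a) (TVar 0)) -> satR (scons x e) (le_f (TF a (TVar 0)) (TMul (TVar 0) (TVar 0)))). rewrite !sat_le. simpl. nra.
Qed.

Lemma mu0_true e : satR e mu0.
Proof. intros x. apply sat_le. simpl. nra. Qed.

Lemma bound_imps k Ps C : (forall P, In P Ps -> form_bound k P) -> form_bound k C -> form_bound k (imps Ps C).
Proof. induction Ps; simpl; auto. Qed.

Lemma lang_imps P Ps C : (forall Q, In Q Ps -> lang_form P Q) -> lang_form P C -> lang_form P (imps Ps C).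
Proof. induction Ps; simpl; auto. Qed.

Lemma F_INR F (HF : is_subfield F) n : F (INR n).
Proof. induction n. - apply HF. - rewrite S_INR. apply HF; auto. apply HF. Qed.

Lemma F_2 F (HF : is_subfield F) : F 2.
Proof. replace 2 with (1 + 1) by ring. apply HF; apply HF. Qed.

Lemma Gam_T F (HF : is_subfield F) H l :
  form_bound 2 H -> lang_form (add_term F) H -> (forall a, In a l -> F a /\ 0 <= a) ->
  (forall e, satR e (alpha H l)) -> forall B, In B (Gam H l) -> T_union F B.
Proof.
  intros Hb HL Hl Ht B HB. simpl in HB. destruct HB as [<-|[<-|HB]].
  - left. split; [|split].
    + change (lang_form (add_term F) H /\ lang_form (add_term F) (imps (pos0 :: map cP l) concl)). split; auto. apply lang_imps.
      * intros Q [<-|HQ]; [simpl; tauto|]. apply in_map_iff in HQ; destruct HQ as [a [<- Ha]].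
        simpl. destruct (Hl a Ha). tauto.
      * simpl. pose proof (F_2 F HF). tauto.
    + change (form_bound 2 H /\ form_bound 2 (imps (pos0 :: map cP l) concl)). split; auto. apply bound_imps.
      * intros Q [<-|HQ]; [simpl; repeat split; lia|]. apply in_map_iff in HQ; destruct HQ as [a [<- Ha]].
        simpl; repeat split; lia.
      * simpl; repeat split; lia.
    + auto.
  - right. split; [simpl; tauto|split; [unfold sentence; simpl; repeat split; lia|apply mu0_true]].
  - apply in_map_iff in HB. destruct HB as [a [<- Ha]]. destruct (Hl a Ha) as [Fa Ha0].
    right. split; [simpl; tauto|split; [unfold sentence; simpl; repeat split; lia|apply mu_true; auto]].
Qed.

Definition mkl (b h : R) (N : nat) : list R := map (fun i => b + INR i * h) (seq 0 (S N)).

Lemma mkl_in b h N i : (i <= N)%nat -> In (b + INR i * h) (mkl b h N).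
Proof. intros Hi. unfold mkl. apply (in_map (fun i => b + INR i * h)). apply in_seq. lia. Qed.

Lemma mkl_prop F (HF : is_subfield F) b h N : F b -> F h -> 0 <= b -> 0 <= h ->
  forall a, In a (mkl b h N) -> F a /\ 0 <= a.
Proof.
  intros Fb Fh Hb Hh a Ha. unfold mkl in Ha. apply in_map_iff in Ha. destruct Ha as [i [<- _]].
  split. - apply HF; auto. apply HF; auto. apply F_INR; auto.
  - pose proof (pos_INR i). nra.
Qed.

Lemma find_i N b h x : 0 < h -> b <= x ->
  exists i, (i <= N)%nat /\ b + INR i * h <= x /\ (x < b + INR i * h + h \/ i = N).
Proof.
  intros Hh Hb. induction N.
  - exists 0%nat. simpl. split; [lia|split; [lra|auto]].
  - destruct IHN as [i [Hi [H1 [H2|H2]]]].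
    + exists i. split; [lia|auto].
    + subst i. destruct (Rlt_dec x (b + INR N * h + h)).
      * exists N. split; [lia|auto].
      * exists (S N). rewrite S_INR. split; [lia|split; [lra|auto]].
Qed.

Definition Hle r := le_f (TVar 1) (cst r).
Definition Hge r := le_f (cst r) (TVar 1).

Lemma proves_le F (HF : is_subfield F) r : F r -> r < 1 -> proves (T_union F) (phi_le r).
Proof.
  intros Fr Hr. set (h := (1 - r) * (1 - r) / 2).
  assert (Hh : 0 < h) by (unfold h; nra).
  destruct (INR_archimed h r Hh) as [N HN].
  set (l := mkl 0 h N).
  exists (Gam (Hle r) l). split.
  - apply Gam_T; auto.
    + simpl; repeat split; lia.
    + simpl; tauto.
    + assert (Fh : F h).
      { unfold h, Rdiv, Rminus. apply (sf_mul F HF); [|apply (sf_inv F HF); [apply F_2; auto|lra]]. repeat first [assumption | apply (sf_1 F HF) | apply (sf_add F HF) | apply (sf_opp F HF) | apply (sf_mul F HF)]. }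
      apply mkl_prop; auto; try lra. apply HF.
    + apply alpha_true. intros x y e Hx Hy Hl. unfold Hle in Hx. rewrite sat_le in Hx. simpl in Hx.
      destruct (Rlt_dec x 0). { lra. }
      destruct (find_i N 0 h x Hh ltac:(lra)) as [i [Hi [H1 H2]]].
      set (a := 0 + INR i * h) in *.
      assert (Ha0 : 0 <= a) by (unfold a; pose proof (pos_INR i); nra).
      assert (H3 : x < a + h).
      { destruct H2 as [H2|H2]; auto. subst i. unfold a in *. lra. }
      assert (Hax := Hl a (mkl_in 0 h N i Hi) ltac:(lra)).
      assert (E1 : (2 - a) * x <= (2 - a) * (a + h)) by (apply Rmult_le_compat_l; lra).
      assert (E2 : (1 - r) * (1 - r) <= (1 - a) * (1 - a)) by nra.
      assert (E3 : (2 - a) * h <= 2 * h) by nra.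
      unfold h in *. nra.
  - apply derive_phi; reflexivity.
Qed.

Lemma proves_ge F (HF : is_subfield F) r : F r -> 1 < r -> proves (T_union F) (phi_ge r).
Proof.
  intros Fr Hr. set (h := (r - 1) * (r - 1) / 2).
  assert (Hh : 0 < h) by (unfold h; nra).
  destruct (INR_archimed h 2 Hh) as [N HN].
  set (l := mkl r h N).
  exists (Gam (Hge r) l). split.
  - apply Gam_T; auto.
    + simpl; repeat split; lia.
    + simpl; tauto.
    + assert (Fh : F h).
      { unfold h, Rdiv, Rminus. apply (sf_mul F HF); [|apply (sf_inv F HF); [apply F_2; auto|lra]]. repeat first [assumption | apply (sf_1 F HF) | apply (sf_add F HF) | apply (sf_opp F HF) | apply (sf_mul F HF)]. }
      apply mkl_prop; auto; try lra. 
    + apply alpha_true. intros x y e Hx Hy Hl. unfold Hge in Hx. rewrite sat_le in Hx. simpl in Hx.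
      destruct (find_i N r h x Hh ltac:(lra)) as [i [Hi [H1 H2]]].
      set (a := r + INR i * h) in *.
      assert (Ha0 : r <= a) by (unfold a; pose proof (pos_INR i); nra).
      assert (Hax := Hl a (mkl_in r h N i Hi) ltac:(lra)).
      destruct (Rle_dec 2 a). { nra. }
      assert (H3 : x < a + h).
      { destruct H2 as [H2|H2]; auto. subst i. unfold a in *. lra. }
      assert (E1 : (2 - a) * x <= (2 - a) * (a + h)) by (apply Rmult_le_compat_l; lra).
      assert (E2 : (r - 1) * (r - 1) <= (a - 1) * (a - 1)) by nra.
      assert (E3 : (2 - a) * h <= h) by nra.
      unfold h in *. nra.
  - apply derive_phi; reflexivity.
Qed.

Lemma not_proves F (P : form) :
  (forall U, UF U -> forall e, ~ sat (MM U) e P) -> ~ proves (T_union F) P.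
Proof.
  intros Hc [G0 [HG HD]]. destruct UFM.ultra_exists as [U [h1 [h2 [h3 [h4 h5]]]]].
  assert (HU : UF U) by (constructor; auto).
  apply (Hc U HU (fun _ _ => 0)). apply (soundness _ (MM_good U HU) G0 P HD).
  intros B HB. apply (MM_T U HU F B (HG B HB)).
Qed.

Theorem theorem5p3 (F : R -> Prop) (HF : is_subfield F) (r : R) (Hr : F r) :
  (proves (T_union F) (phi_le r) <-> r < 1) /\
  (proves (T_union F) (phi_ge r) <-> 1 < r).
Proof.
  split; split.
  - intros HP. destruct (Rlt_dec r 1) as [|Hn]; auto. exfalso.
    apply (not_proves F (phi_le r)); auto. intros U HU e. apply cex_le; auto; lra.
  - apply proves_le; auto.
  - intros HP. destruct (Rlt_dec 1 r) as [|Hn]; auto. exfalso.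
    apply (not_proves F (phi_ge r)); auto. intros U HU e. apply cex_ge; auto; lra.
  - apply proves_ge; auto.
Qed.
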